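(* Let $G$ and $H$ be graphs without isolated vertices. Then $G$ and $H$ are isomorphic as graphs if and only if $B(G)$ and $B(H)$ are isomorphic as $\mathbb{Z}_2$-posets, i.e. there is an order isomorphism $B(G)\to B(H)$ commuting with the involutions.
   Context: A graph $G$ is a set $V(G)$ together with a symmetric subset $E(G) \subset V(G)\times V(G)$ (undirected, no multiple edges, loops allowed; graphs may be infinite). For $v \in V(G)$, $N(v)=\{w : (v,w)\in E(G)\}$; $v$ is isolated if $N(v)=\emptyset$. The box complex $B(G)$ is the poset of all pairs $(\sigma,\tau)$ of non-empty (possibly infinite) subsets of $V(G)$ with $\sigma\times\tau\subset E(G)$, ordered by $(\sigma,\tau)\le(\sigma',\tau')$ iff $\sigma\subset\sigma'$ and $\tau\subset\tau'$, and equipped with the involution $(\sigma,\tau)\leftrightarrow(\tau,\sigma)$. *)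

(* Defs.v *)
Set Implicit Arguments.

(* A graph: a vertex type with a symmetric adjacency relation
   (undirected, no multiple edges, loops allowed, possibly infinite). *)
Record graph := Graph {
  V : Type;
  adj : V -> V -> Prop;
  adj_sym : forall v w, adj v w -> adj w v
}.

Definition isolated (G : graph) (v : V G) : Prop := ~ exists w, adj G v w.

Definition no_isolated (G : graph) : Prop := forall v : V G, ~ isolated G v.

Definition bijective {A B : Type} (f : A -> B) : Prop :=
  exists g : B -> A, (forall x, g (f x) = x) /\ (forall y, f (g y) = y).

Definition graph_iso (G H : graph) : Prop :=
  exists phi : V G -> V H, bijective phi /\
    (forall v w, adj G v w <-> adj H (phi v) (phi w)).

(* The cells of the box complex B(G): pairs (sigma, tau) of non-empty
   (possibly infinite) subsets with sigma x tau contained in E(G). *)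
Definition is_box_cell (G : graph) (p : (V G -> Prop) * (V G -> Prop)) : Prop :=
  (exists x, fst p x) /\ (exists y, snd p y) /\
  (forall x y, fst p x -> snd p y -> adj G x y).

Definition box (G : graph) : Type := { p | is_box_cell G p }.

Definition box_le (G : graph) (a b : box G) : Prop :=
  (forall x, fst (proj1_sig a) x -> fst (proj1_sig b) x) /\
  (forall x, snd (proj1_sig a) x -> snd (proj1_sig b) x).

Lemma box_inv_cell (G : graph) (a : box G) :
  is_box_cell G (snd (proj1_sig a), fst (proj1_sig a)).
Proof.
  destruct a as [[s t] [Hs [Ht He]]]; simpl in *.
  split; [exact Ht | split; [exact Hs |]].
  intros x y Hx Hy; apply adj_sym; apply He; assumption.
Qed.

Definition box_inv (G : graph) (a : box G) : box G :=
  exist _ (snd (proj1_sig a), fst (proj1_sig a)) (box_inv_cell a).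

Definition z2_poset_iso (G H : graph) : Prop :=
  exists f : box G -> box H, bijective f /\
    (forall a b, box_le a b <-> box_le (f a) (f b)) /\
    (forall a, f (box_inv a) = box_inv (f a)).

(* Main.v *)
Require Import Defs.
From Stdlib Require Import Classical ClassicalEpsilon FunctionalExtensionality PropExtensionality ProofIrrelevance.
Set Implicit Arguments.

Record EI (G H : graph) (F : V G -> V G -> V H * V H) (Fi : V H -> V H -> V G * V G) : Prop := {
  ei_F : forall x y, adj G x y -> adj H (fst (F x y)) (snd (F x y));
  ei_Fi : forall u v, adj H u v -> adj G (fst (Fi u v)) (snd (Fi u v));
  ei_FiF : forall x y, adj G x y -> Fi (fst (F x y)) (snd (F x y)) = (x,y);
  ei_FFi : forall u v, adj H u v -> F (fst (Fi u v)) (snd (Fi u v)) = (u,v);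
  ei_sw : forall x y, adj G x y -> F y x = (snd (F x y), fst (F x y));
  ei_sh : forall x y x' y', adj G x y -> adj G x' y' ->
     (x = x' \/ y = y' <-> fst (F x y) = fst (F x' y') \/ snd (F x y) = snd (F x' y'))
}.




Arguments ei_F {G H F Fi} _ {x y} _.
Arguments ei_Fi {G H F Fi} _ {u v} _.
Arguments ei_FiF {G H F Fi} _ {x y} _.
Arguments ei_FFi {G H F Fi} _ {u v} _.
Arguments ei_sw {G H F Fi} _ {x y} _.
Arguments ei_sh {G H F Fi} _ {x y x' y'} _ _.

Lemma Finj G H F Fi (E : EI G H F Fi) x y x' y' : adj G x y -> adj G x' y' ->
  F x y = F x' y' -> x = x' /\ y = y'.
Proof.
  intros h h' e. pose proof (ei_FiF E h) as a. pose proof (ei_FiF E h') as b.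
  rewrite e in a. rewrite a in b. inversion b; auto.
Qed.

Lemma Fsurj G H F Fi (E : EI G H F Fi) u v : adj H u v ->
  exists a b, adj G a b /\ F a b = (u,v).
Proof.
  intros h. exists (fst (Fi u v)), (snd (Fi u v)). split.
  apply (ei_Fi E h). apply (ei_FFi E h).
Qed.

Lemma shr G H F Fi (E : EI G H F Fi) x y x' y' u v u' v' :
  adj G x y -> adj G x' y' -> F x y = (u,v) -> F x' y' = (u',v') ->
  (x = x' \/ y = y' <-> u = u' \/ v = v').
Proof.
  intros h h' e e'. pose proof (ei_sh E h h') as s. rewrite e, e' in s. exact s.
Qed.

Arguments Finj {G H F Fi} E {x y x' y'} _ _ _.
Arguments Fsurj {G H F Fi} E {u v} _.
Arguments shr {G H F Fi} E {x y x' y' u v u' v'} _ _ _ _.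

Definition P1 G H (F : V G -> V G -> V H * V H) x z :=
  (forall y, adj G x y -> fst (F x y) = z) /\
  (forall w, adj H z w -> exists y, adj G x y /\ F x y = (z,w)).
Definition P2 G H (F : V G -> V G -> V H * V H) x z :=
  (forall y, adj G x y -> snd (F x y) = z) /\
  (forall w, adj H w z -> exists y, adj G x y /\ F x y = (w,z)).

Lemma pair_eta {A B} (p : A * B) : p = (fst p, snd p).
Proof. destruct p; reflexivity. Qed.

Lemma ex_P G H F Fi (E : EI G H F Fi) (hG : no_isolated G) x :
  (exists z, P1 G H F x z) \/ (exists z, P2 G H F x z).
Proof.
  destruct (NNPP _ (hG x)) as [y hy].
  destruct (F x y) as [u v] eqn:Exy.
  destruct (classic (exists y', adj G x y' /\ y' <> y)) as [[y' [hy' hne]] | hone].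
  - destruct (F x y') as [u' v'] eqn:Exy'.
    destruct (proj1 (shr E hy hy' Exy Exy') (or_introl eq_refl)) as [h1|h1]; rewrite <- h1 in Exy'.
    + left. exists u. split.
      * intros y'' hy''. destruct (F x y'') as [p q] eqn:E''. simpl.
        destruct (classic (p = u)) as [|hp]; [auto|exfalso].
        destruct (proj1 (shr E hy hy'' Exy E'') (or_introl eq_refl)) as [|h2]; [congruence|].
        destruct (proj1 (shr E hy' hy'' Exy' E'') (or_introl eq_refl)) as [|h3]; [congruence|].
        subst. destruct (Finj E hy hy' (eq_trans Exy (eq_sym Exy'))); auto.
      * intros w hw. destruct (Fsurj E hw) as [a [b [hab Eab]]].
        destruct (proj2 (shr E hab hy Eab Exy) (or_introl eq_refl)) as [-> | ->]; [eauto|].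
        destruct (proj2 (shr E hab hy' Eab Exy') (or_introl eq_refl)) as [-> | ]; [eauto|congruence].
    + right. exists v. split.
      * intros y'' hy''. destruct (F x y'') as [p q] eqn:E''. simpl.
        destruct (classic (q = v)) as [|hp]; [auto|exfalso].
        destruct (proj1 (shr E hy hy'' Exy E'') (or_introl eq_refl)) as [h2|]; [|congruence].
        destruct (proj1 (shr E hy' hy'' Exy' E'') (or_introl eq_refl)) as [h3|]; [|congruence].
        subst. destruct (Finj E hy hy' (eq_trans Exy (eq_sym Exy'))); auto.
      * intros w hw. destruct (Fsurj E hw) as [a [b [hab Eab]]].
        destruct (proj2 (shr E hab hy Eab Exy) (or_intror eq_refl)) as [-> | ->]; [eauto|].
        destruct (proj2 (shr E hab hy' Eab Exy') (or_intror eq_refl)) as [-> | ]; [eauto|congruence].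
  - assert (one : forall y', adj G x y' -> y' = y).
    { intros y' h'. apply NNPP. intro n. apply hone. eauto. }
    destruct (classic (forall w, adj H u w -> w = v)) as [hu|hu].
    + left. exists u. split.
      * intros y'' h''. rewrite (one _ h''), Exy. reflexivity.
      * intros w hw. rewrite (hu _ hw). eauto.
    + right. apply not_all_ex_not in hu. destruct hu as [w hw].
      apply imply_to_and in hw. destruct hw as [hw hwv].
      exists v. split.
      * intros y'' h''. rewrite (one _ h''), Exy. reflexivity.
      * intros w' hw'. exists y. split; auto. rewrite Exy.
        destruct (classic (w' = u)) as [->|hne]; [reflexivity|exfalso].
        destruct (Fsurj E hw) as [a [b [hab Eab]]].
        destruct (proj2 (shr E hab hy Eab Exy) (or_introl eq_refl)) as [-> | ->].
        { rewrite (one _ hab), Exy in Eab. congruence. }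
        destruct (Fsurj E hw') as [c [d [hcd Ecd]]].
        destruct (proj2 (shr E hcd hy Ecd Exy) (or_intror eq_refl)) as [-> | ->].
        { rewrite (one _ hcd), Exy in Ecd. congruence. }
        destruct (proj1 (shr E hab hcd Eab Ecd) (or_intror eq_refl)); congruence.
Qed.

Definition sP G H (F : V G -> V G -> V H * V H) x := exists z, P1 G H F x z.

Lemma phi_exists G H F Fi (E : EI G H F Fi) (hG : no_isolated G) :
  exists phi : V G -> V H, forall x,
    (sP G H F x -> P1 G H F x (phi x)) /\ (~ sP G H F x -> P2 G H F x (phi x)).
Proof.
  assert (h : forall x, exists z, (sP G H F x -> P1 G H F x z) /\ (~ sP G H F x -> P2 G H F x z)).
  { intro x. destruct (classic (sP G H F x)) as [[z hz]|hn].
    - exists z. split; [auto|]. intro n. exfalso. apply n. exists z; auto.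
    - destruct (ex_P E hG x) as [[z hz]|[z hz]].
      + exfalso. apply hn. exists z; auto.
      + exists z. split; [intro; contradiction|auto]. }
  exists (fun x => proj1_sig (constructive_indefinite_description _ (h x))).
  intro x. exact (proj2_sig (constructive_indefinite_description _ (h x))).
Qed.

Lemma cons G H F Fi (E : EI G H F Fi) (hG : no_isolated G) x y :
  adj G x y -> sP G H F x -> sP G H F y.
Proof.
  intros hxy [z [P1a P1b]].
  destruct (F x y) as [u v] eqn:Exy.
  assert (zu : z = u) by (rewrite <- (P1a _ hxy), Exy; reflexivity). subst z.
  pose proof (ei_sw E hxy) as Eyx. rewrite Exy in Eyx. simpl in Eyx.
  apply NNPP. intro ns.
  destruct (ex_P E hG y) as [hp|[z' [P2a P2b]]]; [contradiction|].
  assert (z'u : z' = u) by (rewrite <- (P2a _ (adj_sym _ _ _ hxy)), Eyx; reflexivity). subst z'.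
  assert (onex : forall y', adj G x y' -> y' = y).
  { intros y' h'. destruct (F x y') as [p w] eqn:E'.
    assert (p = u) by (rewrite <- (P1a _ h'), E'; reflexivity). subst p.
    pose proof (ei_F E h') as hw. rewrite E' in hw. simpl in hw.
    destruct (P2b w (adj_sym _ _ _ hw)) as [y'' [h'' E'']].
    pose proof (ei_sw E h'') as s. rewrite E'' in s. simpl in s.
    rewrite <- E' in s. destruct (Finj E (adj_sym _ _ _ h'') h' s). congruence. }
  assert (oney : forall y'', adj G y y'' -> y'' = x).
  { intros y'' h''. destruct (F y y'') as [w p] eqn:E''.
    assert (p = u) by (rewrite <- (P2a _ h''), E''; reflexivity). subst p.
    pose proof (ei_F E h'') as hw. rewrite E'' in hw. simpl in hw.
    destruct (P1b w (adj_sym _ _ _ hw)) as [y' [h' E']].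
    pose proof (ei_sw E h'') as s. rewrite E'' in s. simpl in s.
    rewrite <- E' in s. destruct (Finj E (adj_sym _ _ _ h'') h' s). congruence. }
  apply ns. exists v. split.
  - intros y'' h''. rewrite (oney _ h''), Eyx. reflexivity.
  - intros w hw. exists x. split; [apply adj_sym; auto|]. rewrite Eyx.
    destruct (Fsurj E hw) as [a [b [hab Eab]]].
    destruct (proj2 (shr E hab (adj_sym _ _ _ hxy) Eab Eyx) (or_introl eq_refl)) as [-> | ->].
    + rewrite (oney _ hab), Eyx in Eab. congruence.
    + rewrite (onex _ (adj_sym _ _ _ hab)), Eyx in Eab. congruence.
Qed.
Arguments cons {G H F Fi} E hG {x y} _ _.

Lemma Eq1 G H F Fi (E : EI G H F Fi) (hG : no_isolated G) phi
  (Hphi : forall x, (sP G H F x -> P1 G H F x (phi x)) /\ (~ sP G H F x -> P2 G H F x (phi x)))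
  x y : adj G x y -> sP G H F x -> F x y = (phi x, phi y).
Proof.
  intros h s. pose proof (cons E hG h s) as s'.
  destruct (proj1 (Hphi x) s) as [a _]. destruct (proj1 (Hphi y) s') as [b _].
  pose proof (a _ h) as ea. pose proof (b _ (adj_sym _ _ _ h)) as eb.
  rewrite (ei_sw E h) in eb. simpl in eb.
  rewrite (pair_eta (F x y)), ea, eb. reflexivity.
Qed.

Lemma Eq2 G H F Fi (E : EI G H F Fi) (hG : no_isolated G) phi
  (Hphi : forall x, (sP G H F x -> P1 G H F x (phi x)) /\ (~ sP G H F x -> P2 G H F x (phi x)))
  x y : adj G x y -> ~ sP G H F x -> F x y = (phi y, phi x).
Proof.
  intros h s. assert (s' : ~ sP G H F y) by (intro t; apply s; exact (cons E hG (adj_sym _ _ _ h) t)).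
  destruct (proj2 (Hphi x) s) as [a _]. destruct (proj2 (Hphi y) s') as [b _].
  pose proof (a _ h) as ea. pose proof (b _ (adj_sym _ _ _ h)) as eb.
  rewrite (ei_sw E h) in eb. simpl in eb.
  rewrite (pair_eta (F x y)), ea, eb. reflexivity.
Qed.

Lemma recon G H F Fi (E : EI G H F Fi) (hG : no_isolated G) (hH : no_isolated H) :
  graph_iso G H.
Proof.
  destruct (phi_exists E hG) as [phi Hphi].
  pose proof (Eq1 E hG phi Hphi) as E1. pose proof (Eq2 E hG phi Hphi) as E2.
  assert (inj : forall x x', phi x = phi x' -> x = x').
  { intros x x' e. destruct (NNPP _ (hG x)) as [y hy].
    destruct (classic (sP G H F x)) as [s|s].
    - pose proof (E1 _ _ hy s) as Exy. pose proof (ei_F E hy) as hz. rewrite Exy in hz. simpl in hz.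
      destruct (classic (sP G H F x')) as [s'|s'].
      + destruct (proj1 (Hphi x') s') as [_ b]. rewrite <- e in b.
        destruct (b _ hz) as [y' [h' E']]. rewrite <- Exy in E'.
        destruct (Finj E h' hy E'); auto.
      + destruct (proj2 (Hphi x') s') as [_ b]. rewrite <- e in b.
        destruct (b _ (adj_sym _ _ _ hz)) as [y' [h' E']].
        pose proof (ei_sw E h') as sw. rewrite E' in sw. simpl in sw. rewrite <- Exy in sw.
        destruct (Finj E (adj_sym _ _ _ h') hy sw) as [-> ->].
        exfalso. apply s'. exact (cons E hG hy s).
    - pose proof (E2 _ _ hy s) as Exy. pose proof (ei_F E hy) as hz. rewrite Exy in hz. simpl in hz.
      destruct (classic (sP G H F x')) as [s'|s'].
      + destruct (proj1 (Hphi x') s') as [_ b]. rewrite <- e in b.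
        destruct (b _ (adj_sym _ _ _ hz)) as [y' [h' E']].
        pose proof (ei_sw E h') as sw. rewrite E' in sw. simpl in sw. rewrite <- Exy in sw.
        destruct (Finj E (adj_sym _ _ _ h') hy sw) as [-> ->].
        exfalso. apply s. exact (cons E hG (adj_sym _ _ _ hy) s').
      + destruct (proj2 (Hphi x') s') as [_ b]. rewrite <- e in b.
        destruct (b _ hz) as [y' [h' E']]. rewrite <- Exy in E'.
        destruct (Finj E h' hy E'); auto. }
  assert (surj : forall z, exists x, phi x = z).
  { intro z. destruct (NNPP _ (hH z)) as [w hw].
    destruct (Fsurj E hw) as [a [b [hab Eab]]].
    destruct (classic (sP G H F a)) as [s|s].
    - rewrite (E1 _ _ hab s) in Eab. inversion Eab. eauto.
    - rewrite (E2 _ _ hab s) in Eab. inversion Eab. eauto. }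
  exists phi. split.
  - exists (fun z => proj1_sig (constructive_indefinite_description _ (surj z))). split.
    + intro x. apply inj. exact (proj2_sig (constructive_indefinite_description _ (surj (phi x)))).
    + intro z. exact (proj2_sig (constructive_indefinite_description _ (surj z))).
  - intros x y. split.
    + intro h. pose proof (ei_F E h) as a. destruct (classic (sP G H F x)) as [s|s].
      * rewrite (E1 _ _ h s) in a. exact a.
      * rewrite (E2 _ _ h s) in a. apply adj_sym. exact a.
    + intro h. destruct (classic (sP G H F x)) as [s|s].
      * destruct (proj1 (Hphi x) s) as [_ b]. destruct (b _ h) as [y' [h' E']].
        rewrite (E1 _ _ h' s) in E'. inversion E'. rewrite (inj _ _ H1) in h'. exact h'.
      * destruct (proj2 (Hphi x) s) as [_ b]. destruct (b _ (adj_sym _ _ _ h)) as [y' [h' E']].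
        rewrite (E2 _ _ h' s) in E'. inversion E'. rewrite (inj _ _ H1) in h'. exact h'.
Qed.
Lemma cell_eq (G : graph) (a b : box G) : box_le a b -> box_le b a -> a = b.
Proof.
  destruct a as [[s t] pa], b as [[s' t'] pb]. unfold box_le; simpl.
  intros [h1 h2] [h3 h4].
  assert (s = s') by (apply functional_extensionality; intro; apply propositional_extensionality; split; auto).
  assert (t = t') by (apply functional_extensionality; intro; apply propositional_extensionality; split; auto).
  subst. f_equal. apply proof_irrelevance.
Qed.

Lemma at_cell {G : graph} {x y : V G} (h : adj G x y) :
  is_box_cell G (fun z => z = x, fun z => z = y).
Proof. split; [exists x; reflexivity|split; [exists y; reflexivity|]]. simpl. intros; subst; auto. Qed.

Definition at_ {G : graph} {x y : V G} (h : adj G x y) : box G := exist _ _ (at_cell h).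

Lemma at_inj {G : graph} {x y x' y'} (h : adj G x y) (h' : adj G x' y') :
  at_ h = at_ h' -> x = x' /\ y = y'.
Proof.
  intro e. split.
  - assert (fst (proj1_sig (at_ h)) x) by reflexivity. rewrite e in H. exact H.
  - assert (snd (proj1_sig (at_ h)) y) by reflexivity. rewrite e in H. exact H.
Qed.

Definition minimal (G : graph) (a : box G) := forall b, box_le b a -> b = a.

Lemma at_min {G : graph} {x y} (h : adj G x y) : minimal (at_ h).
Proof.
  intros [[s t] [[x0 hx0] [[y0 hy0] he]]] [l1 l2]; simpl in *.
  apply cell_eq; split; simpl; auto.
  - intros z ->. pose proof (l1 _ hx0). subst. auto.
  - intros z ->. pose proof (l2 _ hy0). subst. auto.
Qed.

Lemma min_at (G : graph) (c : box G) : minimal c -> exists x y (h : adj G x y), c = at_ h.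
Proof.
  intro m. destruct c as [[s t] [[x hx] [[y hy] he]]].
  exists x, y, (he x y hx hy). symmetry. apply m. split; simpl; intros; subst; auto.
Qed.

Definition OI (G H : graph) (f : box G -> box H) (g : box H -> box G) :=
  (forall a, g (f a) = a) /\ (forall b, f (g b) = b) /\
  (forall a b, box_le a b <-> box_le (f a) (f b)) /\
  (forall a, f (box_inv a) = box_inv (f a)).

Lemma OI_sym {G H f g} : @OI G H f g -> OI g f.
Proof.
  intros [gf [fg [le iv]]]. split; [auto|split; [auto|split]].
  - intros a b. rewrite (le (g a) (g b)), !fg. tauto.
  - intro a. rewrite <- (gf (box_inv (g a))), iv, fg. reflexivity.
Qed.

Lemma OI_min {G H f g} (o : @OI G H f g) a : minimal a -> minimal (f a).
Proof.
  destruct o as [gf [fg [le iv]]]. intros m b hb.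
  rewrite <- (fg b) in hb. apply le in hb. rewrite <- (m _ hb). auto.
Qed.

Definition Shr (G : graph) (a b : box G) :=
  exists d, box_le a d /\ box_le b d /\ forall e, box_le e d -> e = a \/ e = b \/ e = d.

Lemma OI_Shr {G H f g} (o : @OI G H f g) a b : Shr a b -> Shr (f a) (f b).
Proof.
  destruct o as [gf [fg [le iv]]]. intros [d [h1 [h2 h3]]].
  exists (f d). split; [apply le; auto|split; [apply le; auto|]].
  intros e he. rewrite <- (fg e) in he. apply le in he.
  destruct (h3 _ he) as [q|[q|q]]; rewrite <- q, fg; auto.
Qed.

Lemma box_le_refl (G : graph) (a : box G) : box_le a a.
Proof. split; auto. Qed.

Lemma Shr_at1 {G : graph} {x y y'} (h : adj G x y) (h' : adj G x y') : Shr (at_ h) (at_ h').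
Proof.
  assert (c : is_box_cell G (fun z => z = x, fun z => z = y \/ z = y')).
  { split; [exists x; reflexivity|split; [exists y; left; reflexivity|]].
    simpl. intros a b -> [-> | ->]; auto. }
  exists (exist _ _ c). split; [split; simpl; auto|split; [split; simpl; auto|]].
  intros [[s t] [[x0 hx0] [[y0 hy0] he]]] [l1 l2]; simpl in *.
  assert (sx : s x) by (pose proof (l1 _ hx0); subst; auto).
  destruct (classic (t y)) as [ty|ty]; destruct (classic (t y')) as [ty'|ty'];
  [right; right| left | right; left | exfalso; destruct (l2 _ hy0); subst; tauto];
  apply cell_eq; split; simpl; intros z hz; simpl in hz;
  first [ apply l1; assumption | destruct (l2 _ hz); subst; tauto | subst; assumption
        | destruct hz; subst; assumption ].
Qed.

Lemma inv_at {G : graph} {x y} (h : adj G x y) : box_inv (at_ h) = at_ (adj_sym _ _ _ h).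
Proof. apply cell_eq; split; simpl; auto. Qed.

Lemma inv_inv (G : graph) (a : box G) : box_inv (box_inv a) = a.
Proof. apply cell_eq; split; simpl; auto. Qed.

Lemma OI_inv G : @OI G G (@box_inv G) (@box_inv G).
Proof.
  split; [apply inv_inv|split; [apply inv_inv|split; [|reflexivity]]].
  intros a b. unfold box_le; simpl. tauto.
Qed.

Lemma Shr_at {G : graph} {x y x' y'} (h : adj G x y) (h' : adj G x' y') :
  Shr (at_ h) (at_ h') <-> x = x' \/ y = y'.
Proof.
  split.
  - intros [d [[a1 a2] [[b1 b2] hd]]]. apply NNPP. intro n.
    assert (hxy : adj G x y').
    { pose proof (proj2 (proj2 (proj2_sig d))) as he. apply he; [apply a1 | apply b2]; reflexivity. }
    destruct (hd (at_ hxy)) as [q|[q|q]].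
    + split; simpl; intros z ->; [apply a1|apply b2]; reflexivity.
    + apply at_inj in q. apply n; right; destruct q; congruence.
    + apply at_inj in q. apply n; left; destruct q; congruence.
    + rewrite <- q in a2. simpl in a2. specialize (a2 y eq_refl). tauto.
  - intros [<- | <-].
    + apply Shr_at1.
    + pose proof (Shr_at1 (adj_sym _ _ _ h) (adj_sym _ _ _ h')) as s.
      apply (OI_Shr (OI_inv G)) in s. rewrite <- !inv_at, !inv_inv in s. exact s.
Qed.

Lemma edge_map G H f g (o : @OI G H f g) (hG : no_isolated G) :
  exists F : V G -> V G -> V H * V H, forall x y (h : adj G x y),
    exists h' : adj H (fst (F x y)) (snd (F x y)), f (at_ h) = at_ h'.
Proof.
  assert (ex : forall x y, exists p : V H * V H, forall h : adj G x y,
             exists h' : adj H (fst p) (snd p), f (at_ h) = at_ h').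
  { intros x y. destruct (classic (adj G x y)) as [h|n].
    - destruct (min_at (OI_min o (@at_min _ _ _ h))) as [u [v [hu e]]].
      exists (u,v). intro h2. rewrite (proof_irrelevance _ h2 h). exists hu. exact e.
    - destruct (NNPP _ (hG x)) as [y0 h0].
      destruct (proj2_sig (f (at_ h0))) as [[u _] _].
      exists (u,u). intro h. contradiction. }
  exists (fun x y => proj1_sig (constructive_indefinite_description _ (ex x y))).
  intros x y. exact (proj2_sig (constructive_indefinite_description _ (ex x y))).
Qed.

Lemma make_EI G H f g (o : @OI G H f g) F Fi
  (sF : forall x y (h : adj G x y),
    exists h' : adj H (fst (F x y)) (snd (F x y)), f (at_ h) = at_ h')
  (sFi : forall x y (h : adj H x y),
    exists h' : adj G (fst (Fi x y)) (snd (Fi x y)), g (at_ h) = at_ h') :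
  EI G H F Fi.
Proof.
  pose proof o as [gf [fg [le iv]]].
  split.
  - intros x y h. destruct (sF x y h) as [h' _]. exact h'.
  - intros x y h. destruct (sFi x y h) as [h' _]. exact h'.
  - intros x y h. destruct (sF x y h) as [h1 e1]. destruct (sFi _ _ h1) as [h2 e2].
    rewrite <- e1, gf in e2. apply at_inj in e2. destruct e2 as [a b].
    rewrite (pair_eta (Fi _ _)), <- a, <- b. reflexivity.
  - intros x y h. destruct (sFi x y h) as [h1 e1]. destruct (sF _ _ h1) as [h2 e2].
    rewrite <- e1, fg in e2. apply at_inj in e2. destruct e2 as [a b].
    rewrite (pair_eta (F _ _)), <- a, <- b. reflexivity.
  - intros x y h. destruct (sF x y h) as [h1 e1]. destruct (sF y x (adj_sym _ _ _ h)) as [h2 e2].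
    rewrite <- inv_at, iv, e1, inv_at in e2. apply at_inj in e2. destruct e2 as [a b].
    rewrite (pair_eta (F y x)), <- a, <- b. reflexivity.
  - intros x y x' y' h h'. destruct (sF x y h) as [h1 e1]. destruct (sF x' y' h') as [h2 e2].
    rewrite <- (Shr_at h h'), <- (Shr_at h1 h2), <- e1, <- e2. split.
    + apply (OI_Shr o).
    + intro s. apply (OI_Shr (OI_sym o)) in s. rewrite !gf in s. exact s.
Qed.

Lemma back G H (hG : no_isolated G) (hH : no_isolated H) : z2_poset_iso G H -> graph_iso G H.
Proof.
  intros [f [[g [gf fg]] [le iv]]].
  assert (o : OI f g) by (split; [|split; [|split]]; auto).
  destruct (edge_map o hG) as [F sF]. destruct (edge_map (OI_sym o) hH) as [Fi sFi].
  exact (recon (make_EI o F Fi sF sFi) hG hH).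
Qed.

Definition mapc {G H : graph} (p : V H -> V G) (c : (V G -> Prop) * (V G -> Prop)) :
  (V H -> Prop) * (V H -> Prop) := (fun u => fst c (p u), fun u => snd c (p u)).

Lemma mapc_cell (G H : graph) (phi : V G -> V H) (psi : V H -> V G)
  (pp : forall x, psi (phi x) = x) (qq : forall y, phi (psi y) = y)
  (hiff : forall v w, adj G v w <-> adj H (phi v) (phi w))
  (c : box G) : is_box_cell H (mapc psi (proj1_sig c)).
Proof.
  destruct c as [[s t] [[x hx] [[y hy] he]]]. unfold mapc; simpl.
  split; [exists (phi x); simpl; rewrite pp; auto|split; [exists (phi y); simpl; rewrite pp; auto|]].
  simpl. intros u w hu hw. rewrite <- (qq u), <- (qq w). apply hiff. auto.
Qed.

Lemma fwd G H : graph_iso G H -> z2_poset_iso G H.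
Proof.
  intros [phi [[psi [pp qq]] hiff]].
  assert (hiff' : forall v w, adj H v w <-> adj G (psi v) (psi w)).
  { intros v w. rewrite hiff, !qq. tauto. }
  exists (fun c => exist _ _ (@mapc_cell G H phi psi pp qq hiff c)).
  split; [|split].
  - exists (fun c => exist _ _ (@mapc_cell H G psi phi qq pp hiff' c)). split.
    + intro c. apply cell_eq; split; unfold mapc; simpl; intro z; rewrite pp; auto.
    + intro c. apply cell_eq; split; unfold mapc; simpl; intro z; rewrite qq; auto.
  - intros a b. unfold box_le, mapc; simpl. split.
    + intros [h1 h2]. split; intros; auto.
    + intros [h1 h2]. split; intros x hx.
      * rewrite <- (pp x) in hx |- *. auto.
      * rewrite <- (pp x) in hx |- *. auto.
  - intro a. apply cell_eq; split; unfold mapc; simpl; auto.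
Qed.

Theorem theorem1p1 (G H : graph) (hG : no_isolated G) (hH : no_isolated H) :
  graph_iso G H <-> z2_poset_iso G H.
Proof.
  split; [apply fwd | apply back; auto].
Qed.
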